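(* Let $A$ be the adjacency matrix of an $n$-cell regular network with valency $v$, let $G=\operatorname{Ker}(A-vI)$ be the eigenspace associated with $v$, assume $\dim G>1$, and let $E$ be a direct complement to $F$ in $G$ (so $G=F\oplus E$). Then: (1) for every special Jordan subspace $J\neq F$ to the network contained in $G$, there is a one-dimensional subspace $J'\subseteq E$ which is special in $E$ such that $P(J)=P(J')$ and $F\oplus J=F\oplus J'$; (2) a one-dimensional subspace of $E$ is a special Jordan subspace to the network if and only if it is special in $E$; (3) if $S=F\oplus J_1\oplus\cdots\oplus J_k$ is a direct sum of one-dimensional special Jordan subspaces to the network contained in $G$, then there are one-dimensional subspaces $J_1',\dots,J_k'$ of $E$, each special in $E$, such that $S=F\oplus J_1'\oplus\cdots\oplus J_k'$.
   Context: A regular network is a finite directed graph on cells $1,\dots,n$ (loops and multiple arrows allowed) in which every cell receives the same number $v$ of arrows, called the valency. Its adjacency matrix $A=[a_{ij}]$ has $a_{ij}$ equal to the number of arrows cell $i$ receives from cell $j$; every row sum of $A$ equals $v$. $A$ acts on $\mathbb{C}^n$. (It is known that $v$ is a semisimple eigenvalue of $A$ and $(1,\dots,1)$ is an eigenvector for $v$.) A polydiagonal is a subspace of $\mathbb{C}^n$ of the form $\{x : x_i=x_j \text{ for all } (i,j)\in R\}$ for some (possibly empty) set $R$ of index pairs. $F=\{x_1=\cdots=x_n\}$ is the fully synchrony subspace. $P(W)$ is the smallest polydiagonal containing a subspace $W$. For a subspace $E\subseteq\mathbb{C}^n$, a subspace $W\subseteq E$ is special in $E$ if for every subspace $U\subseteq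 E$ with $\dim U=\dim W$ and $P(U)\subseteq P(W)$ one has $P(U)=P(W)$. For an eigenvalue $\lambda$ of $A$, the generalized eigenspace is $G_\lambda=\operatorname{Ker}(A-\lambda I)^p$ for $p$ large. A Jordan chain of length $k$ for $\lambda$ is a sequence of nonzero vectors $x_1,\dots,x_k$ with $(A-\lambda I)x_1=0$ and $(A-\lambda I)x_i=x_{i-1}$ for $2\le i\le k$; a Jordan subspace is the ($k$-dimensional) span of a Jordan chain. A Jordan subspace $W$ of a generalized eigenspace $G$ is a special Jordan subspace to the network if for every Jordan subspace $U$ of $G$ with $\dim U=\dim W$ and $P(U)\subseteq P(W)$, either $P(U)=P(W)$ or $U=F$. *)

(* Defs.v *)
(* Vectors of C^n are row vectors 'rV[R]_n; subspaces are
   represented by (the row space of) square matrices 'M[R]_n (mxalgebra). *)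
From HB Require Import structures.
From mathcomp Require Import all_boot all_order all_algebra.
Set Implicit Arguments. Unset Strict Implicit. Unset Printing Implicit Defensive.
Import Order.TTheory GRing.Theory Num.Theory.
Local Open Scope ring_scope.

Section Network.
Variables (R : fieldType) (n : nat).

Definition pair_col (p : 'I_n * 'I_n) : 'M[R]_(n, 1) :=
  \col_k (((k == p.1)%:R : R) - (k == p.2)%:R).

(* the polydiagonal {x : x_i = x_j for all (i,j) in S} *)
Definition polyd (S : {set 'I_n * 'I_n}) : 'M[R]_n :=
  (\bigcap_(p in S) kermx (pair_col p))%MS.

Definition is_polydiagonal (W : 'M[R]_n) : Prop :=
  exists S : {set 'I_n * 'I_n}, (W == polyd S)%MS.

Definition Ppoly (W : 'M[R]_n) : 'M[R]_n :=
  (\bigcap_(S : {set 'I_n * 'I_n} | (W <= polyd S)%MS) polyd S)%MS.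

Definition Fsync : 'M[R]_n := polyd setT.

Definition special_in (E W : 'M[R]_n) : Prop :=
  (W <= E)%MS /\
  forall U : 'M[R]_n, (U <= E)%MS -> \rank U = \rank W ->
    (Ppoly U <= Ppoly W)%MS -> (Ppoly U == Ppoly W)%MS.

(* A acting on column vectors x |-> A x corresponds, for row vectors, to
   x |-> x *m A^T. *)
Definition actmx (A : 'M[R]_n) : 'M[R]_n := A^T.

(* generalized eigenspace G_lambda = Ker (A - lambda I)^n  (n is large enough) *)
Definition gen_eigenspace (A : 'M[R]_n) (lam : R) : 'M[R]_n :=
  kermx ((actmx A - lam%:M) ^+ n).

(* Jordan chain x_1, ..., x_k (indices 0..k-1 here) for lambda *)
Definition jordan_chain (A : 'M[R]_n) (lam : R) (k : nat)
    (x : 'I_k -> 'rV[R]_n) : Prop :=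
  (forall i, x i != 0) /\
  (forall i : 'I_k, val i = 0%N -> x i *m (actmx A - lam%:M) = 0) /\
  (forall (i j : 'I_k), val i = (val j).+1 -> x i *m (actmx A - lam%:M) = x j).

Definition jordan_subspace (A : 'M[R]_n) (lam : R) (W : 'M[R]_n) : Prop :=
  (W <= gen_eigenspace A lam)%MS /\
  exists (k : nat) (x : 'I_k -> 'rV[R]_n),
    (0 < k)%N /\ jordan_chain A lam x /\ (W == \sum_(i < k) <<x i>>)%MS.

Definition special_jordan (A : 'M[R]_n) (lam : R) (W : 'M[R]_n) : Prop :=
  jordan_subspace A lam W /\
  forall U : 'M[R]_n, jordan_subspace A lam U -> \rank U = \rank W ->
    (Ppoly U <= Ppoly W)%MS -> (Ppoly U == Ppoly W)%MS \/ (U == Fsync)%MS.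

End Network.

Definition adjR (R : fieldType) (n : nat) (A : 'M[nat]_n) : 'M[R]_n :=
  map_mx (fun k : nat => (k%:R : R)) A.

Definition regular_network (n : nat) (A : 'M[nat]_n) (v : nat) : Prop :=
  forall i : 'I_n, (\sum_(j < n) A i j)%N = v.

(* Main.v *)
Require Import Defs.
From HB Require Import structures.
From mathcomp Require Import all_boot all_order all_algebra.
Set Implicit Arguments. Unset Strict Implicit. Unset Printing Implicit Defensive.
Import Order.TTheory GRing.Theory Num.Theory.
Local Open Scope ring_scope.


Section H.
Variables (R : fieldType) (n : nat).
Implicit Types (W U V X Y : 'M[R]_n).

Lemma polyd_subP m (W : 'M[R]_(m, n)) S :
  (W <= polyd R S)%MS <-> forall p, p \in S -> W *m pair_col R p = 0.
Proof.
split.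
  by move=> /sub_bigcapmxP H p /H /sub_kermxP.
by move=> H; apply/sub_bigcapmxP => p /H /sub_kermxP.
Qed.

Lemma F_polyd S : (Fsync R n <= polyd R S)%MS.
Proof.
apply/sub_bigcapmxP => p _; apply: (bigcapmx_inf p) => //; exact: in_setT.
Qed.

Lemma F_kill m (W : 'M[R]_(m, n)) p : (W <= Fsync R n)%MS -> W *m pair_col R p = 0.
Proof. by move=> /polyd_subP H; apply: H; rewrite in_setT. Qed.

Lemma sub_polyd_diff X Y S : (X - Y <= Fsync R n)%MS ->
  (X <= polyd R S)%MS -> (Y <= polyd R S)%MS.
Proof.
move=> hXY hX.
have -> : Y = X - (X - Y) by rewrite opprB addrCA subrr addr0.
rewrite addmx_sub // eqmx_opp; exact: submx_trans hXY (F_polyd S).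
Qed.

Lemma Ppoly_diff X Y : (X - Y <= Fsync R n)%MS -> Ppoly X = Ppoly Y.
Proof.
move=> h; rewrite /Ppoly; apply: eq_bigl => S.
apply/idP/idP; first exact: sub_polyd_diff.
apply: sub_polyd_diff; by rewrite -opprB eqmx_opp.
Qed.

Lemma adds_diff X Y : (X - Y <= Fsync R n)%MS ->
  (Fsync R n + X == Fsync R n + Y)%MS.
Proof.
move=> h; apply/andP; split; rewrite addsmx_sub addsmxSl /=.
  have -> : X = (X - Y) + Y by rewrite addrNK.
  by apply: addmx_sub_adds.
have -> : Y = - (X - Y) + X by rewrite opprB subrK.
by apply: addmx_sub_adds; rewrite // eqmx_opp.
Qed.

Lemma sum_delta (r : 'rV[R]_n) (c : 'I_n) :
  \sum_k r 0 k * ((k == c)%:R : R) = r 0 c.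
Proof.
rewrite (bigD1 c) //= eqxx mulr1 big1 ?addr0 //.
by move=> k /negbTE ->; rewrite mulr0.
Qed.

Lemma pair_col_val (r : 'rV[R]_n) (a b : 'I_n) :
  (r *m pair_col R (a, b)) 0 0 = r 0 a - r 0 b.
Proof.
rewrite mxE.
under eq_bigr => k _ do rewrite mxE /= mulrBr.
by rewrite sumrB !sum_delta.
Qed.

Lemma rankF : (\rank (Fsync R n) <= 1)%N.
Proof.
have : (Fsync R n <= (const_mx 1 : 'rV[R]_n))%MS.
  apply/row_subP => i; move: (row i _) (row_sub i (Fsync R n)) => r sr.
  have hr : forall a b, r 0 a = r 0 b.
    move=> a b; apply/eqP; rewrite -subr_eq0 -pair_col_val.
    by rewrite F_kill ?mxE.
  case: (pickP (fun _ : 'I_n => true)) => [i0 _|none].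
    have -> : r = r 0 i0 *: const_mx 1.
      by apply/matrixP => a b; rewrite !mxE mulr1 (ord1 a) (hr b i0).
    by rewrite scalemx_sub.
  have -> : r = 0 by apply/matrixP => a b; have := none b.
  by rewrite sub0mx.
by move/mxrankS => h; apply: leq_trans h (rank_leq_row _).
Qed.

Lemma line_or_disj U V : \rank U = 1%N -> (U <= V)%MS \/ (U :&: V = 0)%MS.
Proof.
move=> hU.
have := mxrankS (capmxSl U V); rewrite hU.
case hc: (\rank (U :&: V)) => [|[|//]] _.
  by right; apply/eqP; rewrite -mxrank_eq0 hc.
left.
have := mxrank_leqif_sup (capmxSl U V); rewrite hU hc => -[_ /= e].
have : (U <= U :&: V)%MS by rewrite -e.
by move/submx_trans; apply; apply: capmxSr.
Qed.

Lemma line_in_F U : \rank U = 1%N -> (U <= Fsync R n)%MS -> (U == Fsync R n)%MS.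
Proof.
move=> hU sUF; rewrite -(mxrank_leqif_eq sUF).2 hU eqn_leq rankF andbT.
by rewrite -hU mxrankS.
Qed.

Variables (A : 'M[R]_n) (lam : R).
Let M := actmx A - lam%:M.

Lemma J1 U : jordan_subspace A lam U -> \rank U = 1%N -> (U <= kermx M)%MS.
Proof.
move=> [_ [k [x [k0 [[nz [c0 _]] /eqmxP eU]]]]] hU.
set i0 := Ordinal k0.
have sx : (x i0 <= U)%MS.
  by rewrite eU (sumsmx_sup i0) // genmxE.
have : (x i0 == U)%MS.
  by rewrite -(mxrank_leqif_eq sx).2 hU rank_rV nz.
move/eqmxP => <-; apply/sub_kermxP; exact: c0.
Qed.

Lemma J2 U : jordan_subspace A lam U -> (U <= kermx M)%MS -> \rank U = 1%N.
Proof.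
move=> [_ [k [x [k0 [[nz [c0 c1]] /eqmxP eU]]]]] sU.
have k1 : k = 1%N.
  case: k x k0 nz c0 c1 eU => [|[|k]] x k0 nz c0 c1 eU //.
  have := c1 (Ordinal (isT : (1 < k.+2)%N)) (Ordinal (isT : (0 < k.+2)%N)) erefl.
  have : (x (Ordinal (isT : (1 < k.+2)%N)) <= kermx M)%MS.
    apply: submx_trans sU; rewrite eU.
    by rewrite (sumsmx_sup (Ordinal (isT : (1 < k.+2)%N))) // genmxE.
  move/sub_kermxP => -> h.
  by move: (nz (Ordinal (isT : (0 < k.+2)%N))); rewrite -h eqxx.
subst k; rewrite eU big_ord1 genmxE rank_rV; by rewrite nz.
Qed.

Lemma J3 U : (0 < n)%N -> (U <= kermx M)%MS -> \rank U = 1%N -> jordan_subspace A lam U.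
Proof.
move=> n0 sU hU; split.
  apply: submx_trans sU _; apply/sub_kermxP.
  have -> : (actmx A - lam%:M) ^+ n = M *m M ^+ n.-1.
    by rewrite mulmxE -exprS prednK.
  rewrite mulmxA.
  by have /sub_kermxP -> := submx_refl (kermx M); rewrite mul0mx.
exists 1%N, (fun _ => nz_row U); split => //; split.
  split; first by move=> _; rewrite nz_row_eq0 -mxrank_eq0 hU.
  split; last by move=> i j; rewrite (ord1 i).
  move=> _ _; apply/sub_kermxP; exact: submx_trans (nz_row_sub U) sU.
rewrite big_ord1; apply/eqmxP; apply: eqmx_trans (eqmx_sym (genmxE _)).
apply: eqmx_sym; apply/eqmxP.
by rewrite -(mxrank_leqif_eq (nz_row_sub U)).2 hU rank_rV nz_row_eq0 -mxrank_eq0 hU.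
Qed.

End H.
Theorem mainTheorem4 (R : numClosedFieldType) (n : nat) (A : 'M[nat]_n) (v : nat)
  (hreg : regular_network A v)
  (E : 'M[R]_n)
  (hdimG : (1 < \rank (kermx (actmx (adjR R A) - (v%:R : R)%:M)))%N)
  (hE : (Fsync R n + E :=: kermx (actmx (adjR R A) - (v%:R : R)%:M))%MS)
  (hFE : mxdirect (Fsync R n + E)) :
  let G := kermx (actmx (adjR R A) - (v%:R : R)%:M) in
  let F := Fsync R n in
  let Ar := adjR R A in
  (* (1) *)
  (forall J : 'M[R]_n, special_jordan Ar (v%:R) J -> (J <= G)%MS -> ~ (J == F)%MS ->
     exists J' : 'M[R]_n,
       [/\ (J' <= E)%MS, \rank J' = 1%N, special_in E J',
           (Ppoly J == Ppoly J')%MS &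
           [/\ mxdirect (F + J), mxdirect (F + J') & (F + J == F + J')%MS]])
  /\
  (* (2) *)
  (forall W : 'M[R]_n, (W <= E)%MS -> \rank W = 1%N ->
     (special_jordan Ar (v%:R) W <-> special_in E W))
  /\
  (* (3) *)
  (forall (k : nat) (Js : 'I_k -> 'M[R]_n),
     (forall i, [/\ special_jordan Ar (v%:R) (Js i), \rank (Js i) = 1%N &
                   (Js i <= G)%MS]) ->
     mxdirect (F + \sum_(i < k) Js i) ->
     exists Js' : 'I_k -> 'M[R]_n,
       [/\ forall i, [/\ (Js' i <= E)%MS, \rank (Js' i) = 1%N & special_in E (Js' i)],
           mxdirect (F + \sum_(i < k) Js' i) &
           (F + \sum_(i < k) Js i == F + \sum_(i < k) Js' i)%MS]).
Proof.
move=> G F Ar.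
rewrite /F /Ar.
pose P := proj_mx E F.
have n0 : (0 < n)%N.
  exact: leq_trans (ltnW hdimG) (rank_leq_row _).
have dEF : (E :&: F = 0)%MS by rewrite capmxC; apply/mxdirect_addsP.
have sFG : (F <= G)%MS by rewrite /G -hE addsmxSl.
have sEG : (E <= G)%MS by rewrite /G -hE addsmxSr.
have sGEF (W : 'M[R]_n) : (W <= G)%MS -> (W <= E + F)%MS by rewrite /G -hE addsmxC.
have hPp (W : 'M[R]_n) : (W <= G)%MS -> Ppoly W = Ppoly (W *m P).
  by move=> sW; apply: Ppoly_diff; apply: proj_mx_compl_sub; apply: sGEF.
have hadd (W : 'M[R]_n) : (W <= G)%MS -> (F + W == F + W *m P)%MS.
  by move=> sW; apply: adds_diff; apply: proj_mx_compl_sub; apply: sGEF.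
have hrk (W : 'M[R]_n) : (W <= G)%MS -> (W :&: F = 0)%MS -> \rank (W *m P) = \rank W.
  move=> sW dW; apply/eqP; rewrite eqn_leq mxrankM_maxl /=.
  have e1 : \rank (F + W) = (\rank F + \rank W)%N.
    by apply/eqP; rewrite (mxrank_adds_leqif F W).2 capmxC dW submx_refl.
  have := (mxrank_adds_leqif F (W *m P)).1.
  by rewrite -(eqmx_rank (hadd W sW)) e1 leq_add2l.
have hEF0 (U : 'M[R]_n) : (U <= E)%MS -> (U <= F)%MS -> U = 0.
  by move=> h1 h2; apply/eqP; rewrite -submx0 -dEF sub_capmx h1 h2.
have hspec (J : 'M[R]_n) : special_jordan Ar (v%:R) J -> (J <= G)%MS -> (J :&: F = 0)%MS ->
    special_in E (J *m P).
  move=> hJ sJ dJ; split; first exact: proj_mx_sub.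
  have rJ : \rank J = 1%N by apply: J2 hJ.1 sJ.
  move=> U sUE hrU hPU.
  have sUG := submx_trans sUE sEG.
  have rU : \rank U = 1%N by rewrite hrU hrk.
  have jU := J3 (A := Ar) (lam := v%:R) n0 sUG rU.
  rewrite -hPp // in hPU *.
  case: (hJ.2 U jU (etrans rU (esym rJ)) hPU) => // /andP[sUF _].
  by move: rU; rewrite (hEF0 U sUE sUF) mxrank0.
split.
  move=> J hJ sJ nJF.
  have rJ : \rank J = 1%N by apply: J2 hJ.1 sJ.
  have dJ : (J :&: F = 0)%MS.
    by case: (line_or_disj F rJ) => // /(line_in_F rJ).
  exists (J *m P); split.
  - exact: proj_mx_sub.
  - by rewrite hrk.
  - exact: hspec.
  - by rewrite -hPp //; apply/andP; split; exact: submx_refl.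
  - split.
    + by apply/mxdirect_addsP; rewrite capmxC.
    + apply/mxdirect_addsP; apply/eqP; rewrite -submx0 -dEF capmxC.
      by rewrite capmxS // proj_mx_sub.
    + exact: hadd.
split.
  move=> W sWE hW; split.
    move=> hJ; split => // U sUE hrU hPU.
    have sUG := submx_trans sUE sEG.
    have jU := J3 (A := Ar) (lam := v%:R) n0 sUG (etrans hrU hW).
    case: (hJ.2 U jU hrU hPU) => // /andP[sUF _].
    by move: hrU; rewrite (hEF0 U sUE sUF) mxrank0 hW.
  move=> hs; split.
    exact: J3 n0 (submx_trans sWE sEG) hW.
  move=> U jU hrU hPU.
  have rU : \rank U = 1%N by rewrite hrU.
  have sUG : (U <= G)%MS by apply: J1 jU rU.
  case: (line_or_disj F rU) => [sUF|dU].
    by right; apply: line_in_F.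
  left; rewrite hPp // in hPU *.
  apply: hs.2 hPU; first exact: proj_mx_sub.
  by rewrite hrk.
move=> k Js hJs hdir.
have hdisj i : (Js i :&: F = 0)%MS.
  move: hdir; rewrite mxdirect_addsE => /and3P[_ _ /eqP h0].
  apply/eqP; rewrite -submx0 -h0 capmxC capmxS //.
  exact: (sumsmx_sup i).
have sJG i : (Js i <= G)%MS by case: (hJs i).
have rJ i : \rank (Js i) = 1%N by case: (hJs i).
have rJ' i : \rank (Js i *m P) = 1%N by rewrite hrk.
have heq : (F + \sum_(i < k) Js i == F + \sum_(i < k) (Js i *m P))%MS.
  apply/andP; split; rewrite addsmx_sub addsmxSl /=;
    apply/sumsmx_subP => i _; have /andP[h1 h2] := hadd _ (sJG i).
    apply: submx_trans (addsmxSr F (Js i)) (submx_trans h1 _).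
    by apply: addsmxS => //; exact: (sumsmx_sup i).
  apply: submx_trans (addsmxSr F (Js i *m P)) (submx_trans h2 _).
  by apply: addsmxS => //; exact: (sumsmx_sup i).
exists (fun i => Js i *m P); split => //.
- move=> i; split; first exact: proj_mx_sub.
  + exact: rJ'.
  + by apply: hspec => //; case: (hJs i).
- move: hdir; rewrite !mxdirectE /= -(eqmx_rank heq).
  have -> : (\sum_(j < k) \rank (Js j *m P) = \sum_(j < k) \rank (Js j))%N.
    by apply: eq_bigr => i _; rewrite rJ' rJ.
  by [].
Qed.
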